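(* Let $D$ be a division algebra and let $\sigma_1,\ldots,\sigma_n$ be pairwise commuting automorphisms of $D$. If the tuple $(\sigma_1,\ldots,\sigma_n)$ is not automorphically normalizable over $D$, then for any positive integers $d_1,\ldots,d_n$ the tuple $(\sigma_1^{d_1},\ldots,\sigma_n^{d_n})$ is also not automorphically normalizable over $D$.
   Context: All rings are associative with unity. For commuting automorphisms $\tau_1,\ldots,\tau_n$ of $D$, $D[t_1,\ldots,t_n;\tau_1,\ldots,\tau_n]$ is the skew polynomial ring in pairwise commuting variables with $t_ia=\tau_i(a)t_i$ for $a\in D$. For a ring $S\supseteq D$, $a\in S$ is automorphic over $D$ with respect to $\tau$ if $ab=\tau(b)a$ for all $b\in D$. Commuting $a_1,\ldots,a_m\in S$ are (left) algebraically independent over $D$ if monomials in them are left linearly independent over $D$. $S$ is automorphically normalizable over $D$ if there exist $m\ge0$ and commuting $a_1,\ldots,a_m\in S$, automorphic over $D$ with respect to pairwise commuting automorphisms, left algebraically independent over $D$, such that $S$ is finitely generated as a left module over the subring $D[a_1,\ldots,a_m]$ generated by $D\cup\{a_1,\ldots,a_m\}$. A tuple $(\tau_1,\ldots,\tau_n)$ of commuting automorphisms is automorphically normalizable over $D$ if every quotient of $D[t_1,\ldots,t_n;\tau_1,\ldots,\tau_n]$ by a proper two-sided ideal is automorphically normalizable over $D$. *)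

(* Defs.v *)
From HB Require Import structures.
From mathcomp Require Import all_boot all_order all_algebra.
Set Implicit Arguments. Unset Strict Implicit. Unset Printing Implicit Defensive.
Import GRing.Theory.
Local Open Scope ring_scope.

Definition is_division_ring (D : unitRingType) : Prop :=
  forall x : D, x != 0 -> x \is a GRing.unit.

Definition monom (S : nzRingType) (m : nat) (a : 'I_m -> S)
  (alpha : {ffun 'I_m -> nat}) : S :=
  \prod_(i < m) a i ^+ alpha i.

Definition automorphic (D : unitRingType) (S : nzRingType) (phi : D -> S)
  (tau : D -> D) (a : S) : Prop :=
  forall b : D, a * phi b = phi (tau b) * a.

Definition left_alg_indep (D : unitRingType) (S : nzRingType) (phi : D -> S)
  (m : nat) (a : 'I_m -> S) : Prop :=
  forall s : seq ({ffun 'I_m -> nat} * D),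
    uniq (map fst s) ->
    \sum_(p <- s) phi p.2 * monom a p.1 = 0 ->
    all (fun p => p.2 == 0) s.

Definition in_gen_subring (D : unitRingType) (S : nzRingType) (phi : D -> S)
  (m : nat) (a : 'I_m -> S) (x : S) : Prop :=
  forall P : S -> Prop,
    P 1 ->
    (forall u v, P u -> P v -> P (u - v)) ->
    (forall u v, P u -> P v -> P (u * v)) ->
    (forall d, P (phi d)) ->
    (forall i, P (a i)) ->
    P x.

Definition aut_normalizable (D : unitRingType) (S : nzRingType) (phi : D -> S)
  : Prop :=
  exists (m : nat) (a : 'I_m -> S) (tau : 'I_m -> {rmorphism D -> D}),
    (forall i, bijective (tau i)) /\
    (forall i j, (tau i) \o (tau j) =1 (tau j) \o (tau i)) /\
    (forall i j, a i * a j = a j * a i) /\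
    (forall i, automorphic phi (tau i) (a i)) /\
    left_alg_indep phi a /\
    exists (k : nat) (b : 'I_k -> S),
      forall s : S, exists c : 'I_k -> S,
        (forall j, in_gen_subring phi a (c j)) /\
        s = \sum_(j < k) c j * b j.

(* (R, iota, t) is the skew polynomial ring D[t_1..t_n; tau_1..tau_n]:
   pairwise commuting variables, t_i a = tau_i(a) t_i, and the monomials
   form a basis of R as a left D-module. *)
Definition is_skew_poly_ring (D : unitRingType) (n : nat) (tau : 'I_n -> D -> D)
  (R : nzRingType) (iota : {rmorphism D -> R}) (t : 'I_n -> R) : Prop :=
  [/\ (forall i j, t i * t j = t j * t i),
      (forall i (x : D), t i * iota x = iota (tau i x) * t i),
      (forall r : R, exists s : seq ({ffun 'I_n -> nat} * D),
          r = \sum_(p <- s) iota p.2 * monom t p.1) &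
      left_alg_indep iota t].

(* The tuple tau is automorphically normalizable over D: every quotient of
   D[t;tau] by a proper two-sided ideal (= every surjective ring morphism onto
   a nonzero ring) is automorphically normalizable over D. *)
Definition tuple_aut_normalizable (D : unitRingType) (n : nat)
  (tau : 'I_n -> D -> D) : Prop :=
  forall (R : nzRingType) (iota : {rmorphism D -> R}) (t : 'I_n -> R),
    is_skew_poly_ring tau iota t ->
    forall (S : nzRingType) (f : {rmorphism R -> S}),
      (forall y : S, exists x : R, f x = y) ->
      aut_normalizable (f \o iota).

(* Main.v *)
Require Import Defs.
From HB Require Import structures.
From mathcomp Require Import all_boot all_order all_algebra.
From mathcomp Require Import boolp.
Set Implicit Arguments. Unset Strict Implicit. Unset Printing Implicit Defensive.
Import GRing.Theory.
Local Open Scope ring_scope.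

Lemma prod_split (R : nzRingType) (I : Type) (r : seq I) (F G : I -> R) :
  (forall i j, G i * F j = F j * G i) ->
  \prod_(i <- r) (F i * G i) = \prod_(i <- r) F i * \prod_(i <- r) G i.
Proof.
move=> FG; elim: r => [|a r IH]; first by rewrite !big_nil mulr1.
rewrite !big_cons IH !mulrA; congr (_ * _); rewrite -!mulrA; congr (_ * _).
by apply: commr_prod => i _; exact: FG.
Qed.

Section Mon.
Variables (D : unitRingType) (R : nzRingType) (iota : {rmorphism D -> R}).
Variables (n : nat) (u : 'I_n -> R) (tau : 'I_n -> D -> D).
Hypothesis ucomm : forall i j, u i * u j = u j * u i.
Hypothesis uskew : forall i x, u i * iota x = iota (tau i x) * u i.

Lemma uX_skew k i x : u i ^+ k * iota x = iota (iter k (tau i) x) * u i ^+ k.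
Proof.
elim: k => [|k IH]; first by rewrite !expr0 mul1r mulr1.
by rewrite exprS -mulrA IH mulrA uskew /= -mulrA -exprS.
Qed.

Definition taupow (a : {ffun 'I_n -> nat}) (r : seq 'I_n) (x : D) :=
  foldr (fun i y => iter (a i) (tau i) y) x r.

Lemma prod_skew (r : seq 'I_n) (a : {ffun 'I_n -> nat}) x :
  \prod_(i <- r) u i ^+ a i * iota x = iota (taupow a r x) * \prod_(i <- r) u i ^+ a i.
Proof.
elim: r => [|j r IH]; first by rewrite !big_nil mul1r mulr1.
by rewrite !big_cons -mulrA IH mulrA uX_skew -mulrA.
Qed.

Definition addf (a b : {ffun 'I_n -> nat}) : {ffun 'I_n -> nat} :=
  [ffun i => (a i + b i)%N].

Lemma monom_add a b : monom u a * monom u b = monom u (addf a b).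
Proof.
rewrite /monom -prod_split; last by move=> i j; apply: commrX; apply/esym; apply: commrX; apply: ucomm.
by apply: eq_bigr => i _; rewrite ffunE exprD.
Qed.

Lemma monom_skew a x : monom u a * iota x = iota (taupow a (index_enum 'I_n) x) * monom u a.
Proof. exact: prod_skew. Qed.

Definition span (x : R) : Prop :=
  exists s : seq ({ffun 'I_n -> nat} * D), x = \sum_(p <- s) iota p.2 * monom u p.1.

Lemma span1 : span 1.
Proof.
exists [:: ([ffun=> 0%N], 1)]; rewrite big_cons big_nil addr0 rmorph1 mul1r /monom.
by rewrite big1 // => i _; rewrite ffunE expr0.
Qed.

Lemma spanB x y : span x -> span y -> span (x - y).
Proof.
move=> [s ->] [s' ->]; exists (s ++ map (fun p => (p.1, - p.2)) s').
rewrite big_cat big_map /= -sumrN; congr (_ + _); apply: eq_bigr => p _.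
by rewrite rmorphN mulNr.
Qed.

Lemma spanM x y : span x -> span y -> span (x * y).
Proof.
move=> [s ->] [s' ->].
exists (map (fun pq : ({ffun 'I_n -> nat} * D) * ({ffun 'I_n -> nat} * D) =>
   (addf pq.1.1 pq.2.1, pq.1.2 * taupow pq.1.1 (index_enum 'I_n) pq.2.2))
   [seq (p, q) | p <- s, q <- s']).
rewrite big_map big_allpairs mulr_suml; apply: eq_bigr => p _.
rewrite mulr_sumr; apply: eq_bigr => q _ /=.
by rewrite -mulrA (mulrA (monom u p.1)) monom_skew -mulrA monom_add mulrA rmorphM.
Qed.

End Mon.
Record cpred (R : nzRingType) := CPred {
  cp : R -> Prop;
  cp1 : cp 1;
  cpB : forall u v, cp u -> cp v -> cp (u - v);
  cpM : forall u v, cp u -> cp v -> cp (u * v) }.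

Section SubR.
Variables (R : nzRingType) (C : cpred R).
Definition prd : pred R := fun x => `[< cp C x >].
Lemma prd_closed : subring_closed prd.
Proof.
split; rewrite /prd.
- exact/asboolP/cp1.
- by move=> u v /asboolP Hu /asboolP Hv; apply/asboolP; apply cpB.
- by move=> u v /asboolP Hu /asboolP Hv; apply/asboolP; apply cpM.
Qed.
Record subT := SubT {sv : R; svP : prd sv}.
HB.instance Definition _ := [isSub for sv].
HB.instance Definition _ := [Choice of subT by <:].
HB.instance Definition _ := GRing.SubChoice_isSubNzRing.Build R prd subT prd_closed.

Lemma svB (x y : subT) : sv (x - y) = sv x - sv y. Proof. exact: (rmorphB val). Qed.
Lemma svM (x y : subT) : sv (x * y) = sv x * sv y. Proof. exact: (rmorphM val). Qed.
Lemma sv1 : sv (1 : subT) = 1. Proof. exact: (rmorph1 val). Qed.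
Lemma sv_inj : injective sv. Proof. exact: val_inj. Qed.
Lemma svPr (x : subT) : cp C (sv x). Proof. exact/asboolP/svP. Qed.

Section Res.
Variables (A : nzRingType) (g : {rmorphism A -> R}) (Hg : forall x, cp C (g x)).
Definition gres (x : A) : subT := SubT (asboolT (Hg x)).
Lemma gres_zmod : zmod_morphism gres.
Proof. by move=> x y; apply: sv_inj; rewrite svB /= rmorphB. Qed.
Lemma gres_mon : monoid_morphism gres.
Proof.
split; first by apply: sv_inj; rewrite sv1 /= rmorph1.
by move=> x y; apply: sv_inj; rewrite svM /= rmorphM.
Qed.
HB.instance Definition _ := GRing.isZmodMorphism.Build A subT gres gres_zmod.
HB.instance Definition _ := GRing.isMonoidMorphism.Build A subT gres gres_mon.
Definition gresM : {rmorphism A -> subT} := gres.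
End Res.
End SubR.
Arguments sv {R C}.
Arguments SubT {R C}.
Lemma sv0 (R : nzRingType) (C : cpred R) : sv (0 : subT C) = 0.
Proof. exact: (rmorph0 val). Qed.
Lemma sv_sum (R : nzRingType) (C : cpred R) (I : Type) (r : seq I) (F : I -> subT C) :
  sv (\sum_(i <- r) F i) = \sum_(i <- r) sv (F i).
Proof. exact: (rmorph_sum val). Qed.
Lemma sv_prod (R : nzRingType) (C : cpred R) (I : Type) (r : seq I) (F : I -> subT C) :
  sv (\prod_(i <- r) F i) = \prod_(i <- r) sv (F i).
Proof. exact: (rmorph_prod val). Qed.
Lemma svX (R : nzRingType) (C : cpred R) (x : subT C) k : sv (x ^+ k) = sv x ^+ k.
Proof. exact: (rmorphXn val). Qed.

Lemma gs_sum (D : unitRingType) (S : nzRingType) (phi : D -> S) m (a : 'I_m -> S)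
  (I : Type) (r : seq I) (F : I -> S) :
  (forall i, in_gen_subring phi a (F i)) -> in_gen_subring phi a (\sum_(i <- r) F i).
Proof.
move=> HF P P1 PB PM Pd Pa.
have P0 : P 0 by rewrite -(subrr 1); apply: PB.
elim: r => [|x r IH]; first by rewrite big_nil.
rewrite big_cons -[\sum_(j <- r) F j]opprK -(sub0r (\sum_(j <- r) F j)).
apply PB; first exact: (HF x P P1 PB PM Pd Pa).
exact: PB.
Qed.

Lemma gs_mul (D : unitRingType) (S : nzRingType) (phi : D -> S) m (a : 'I_m -> S) x y :
  in_gen_subring phi a x -> in_gen_subring phi a y -> in_gen_subring phi a (x * y).
Proof. move=> Hx Hy P P1 PB PM Pd Pa; apply PM; [exact: (Hx P P1 PB PM Pd Pa) | exact: (Hy P P1 PB PM Pd Pa)]. Qed.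

Lemma gs_sv (D : unitRingType) (S : nzRingType) (C : cpred S) (phi : D -> subT C)
  (psi : D -> S) m (a : 'I_m -> subT C) (c : subT C) :
  (forall x, psi x = sv (phi x)) ->
  in_gen_subring phi a c -> in_gen_subring psi (fun i => sv (a i)) (sv c).
Proof.
move=> Hpsi Hc P P1 PB PM Pd Pa.
apply: (Hc (fun x => P (sv x))).
- by rewrite sv1.
- by move=> x y Px Py; rewrite svB; apply: PB.
- by move=> x y Px Py; rewrite svM; apply: PM.
- by move=> x; rewrite -Hpsi.
- exact: Pa.
Qed.

Lemma fin_reindex (S : nzRingType) (T : finType) (Q : S -> Prop) (g : T -> S) :
  (forall s, exists c : T -> S, (forall j, Q (c j)) /\ s = \sum_(j : T) c j * g j) ->
  exists k (b : 'I_k -> S), forall s, exists c : 'I_k -> S,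
    (forall j, Q (c j)) /\ s = \sum_(j < k) c j * b j.
Proof.
move=> H; exists #|T|, (fun j => g (enum_val j)) => s.
have [c [Hc ->]] := H s; exists (fun j => c (enum_val j)); split; first by move=> j; apply: Hc.
by rewrite -(big_enum_val (A := T) (fun j => c j * g j)).
Qed.

Lemma prod_single (R : nzRingType) n (u : 'I_n -> R) (i : 'I_n) (r : seq 'I_n) :
  uniq r -> \prod_(j <- r) u j ^+ (j == i) = if i \in r then u i else 1.
Proof.
elim: r => [|a r IH] /=; first by rewrite big_nil.
case/andP=> ar ur; rewrite big_cons IH // in_cons.
case: (eqVneq a i) => [<-|ai] /=.
  by rewrite (negbTE ar) expr1 mulr1.
by rewrite expr0 mul1r.
Qed.

Definition dmul n (d : 'I_n -> nat) (a : {ffun 'I_n -> nat}) : {ffun 'I_n -> nat} :=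
  [ffun i => (d i * a i)%N].

Unset Implicit Arguments.
Set Strict Implicit.

Theorem proposition5p1 (D : unitRingType) (Ddiv : is_division_ring D)
  (n : nat) (sigma : 'I_n -> {rmorphism D -> D})
  (sigma_bij : forall i, bijective (sigma i))
  (sigma_comm : forall i j, (sigma i) \o (sigma j) =1 (sigma j) \o (sigma i)) :
  ~ tuple_aut_normalizable (fun i => (sigma i : D -> D)) ->
  forall d : 'I_n -> nat, (forall i, (0 < d i)%N) ->
  ~ tuple_aut_normalizable (fun i => iter (d i) (sigma i)).
Proof.
move=> notT d dpos TAN; apply: notT => R iota t skew S f fsurj.
case: skew => tcomm tskew tspan tindep.
pose u i := t i ^+ d i.
have ucomm : forall i j, u i * u j = u j * u i.
  by move=> i j; apply: commrX; apply/esym; apply: commrX; apply: tcomm.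
have uskew : forall i x, u i * iota x = iota (iter (d i) (sigma i) x) * u i.
  by move=> i x; apply: (uX_skew (tau := fun i => sigma i)).
pose CR := CPred (span1 iota u) (@spanB _ _ iota _ u) (spanM ucomm uskew).
have Hiota : forall x, cp CR (iota x).
  move=> x; exists [:: ([ffun=> 0%N], x)]; rewrite big_cons big_nil addr0 /monom.
  by rewrite big1 ?mulr1 // => i _; rewrite ffunE expr0.
pose iota' : {rmorphism D -> subT CR} := gresM Hiota.
have Hu : forall i, cp CR (u i).
  move=> i; exists [:: ([ffun j => (j == i) : nat], 1)].
  rewrite big_cons big_nil addr0 rmorph1 mul1r /monom /=.
  rewrite (eq_bigr (fun j => u j ^+ (j == i))); last by move=> j _; rewrite ffunE.
  by rewrite prod_single ?index_enum_uniq // mem_index_enum.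
pose u' i : subT CR := SubT _ (asboolT (Hu i)).
have monom_ut : forall a, monom u a = monom t (dmul d a).
  by move=> a; rewrite /monom; apply: eq_bigr => i _; rewrite ffunE /u -exprM.
have Hskew : is_skew_poly_ring (fun i => iter (d i) (sigma i)) iota' u'.
  split.
  - by move=> i j; apply: sv_inj; rewrite !svM /=.
  - by move=> i x; apply: sv_inj; rewrite !svM /=.
  - move=> r; have [s Hs] := svPr r; exists s; apply: sv_inj.
    rewrite Hs sv_sum; apply: eq_bigr => p _; rewrite svM sv_prod /=.
    by congr (_ * _); apply: eq_bigr => i _; rewrite svX.
  - move=> s us H0.
    have H1 : \sum_(p <- s) iota p.2 * monom t (dmul d p.1) = 0.
      rewrite -[RHS](sv0 CR) -H0 sv_sum; apply: eq_bigr => p _; rewrite svM sv_prod /= -monom_ut.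
      by congr (_ * _); apply: eq_bigr => i _; rewrite svX.
    have := tindep (map (fun p => (dmul d p.1, p.2)) s).
    rewrite all_map; apply.
      rewrite -map_comp (map_comp (dmul d) fst) map_inj_uniq // => a b /ffunP Hab.
      apply/ffunP => i; have := Hab i; rewrite !ffunE => /eqP.
      by rewrite eqn_pmul2l // => /eqP.
    by rewrite big_map.
pose PS (y : S) := exists r : subT CR, f (sv r) = y.
have PS1 : PS 1 by exists 1; rewrite sv1 rmorph1.
have PSB : forall x y, PS x -> PS y -> PS (x - y).
  by move=> x y [r <-] [r' <-]; exists (r - r'); rewrite svB rmorphB.
have PSM : forall x y, PS x -> PS y -> PS (x * y).
  by move=> x y [r <-] [r' <-]; exists (r * r'); rewrite svM rmorphM.
pose CS := CPred PS1 PSB PSM.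
pose g : {rmorphism subT CR -> S} := f \o (val : subT CR -> R).
have Hg : forall x, cp CS (g x) by move=> x; exists x.
pose f' : {rmorphism subT CR -> subT CS} := gresM Hg.
have fsurj' : forall y : subT CS, exists x, f' x = y.
  by move=> y; have [r Hr] := svPr y; exists r; apply: sv_inj.
have AN := TAN _ iota' u' Hskew _ f' fsurj'.
case: AN => m [a [tau' [tbij [tcomm' [acomm [aaut [aind [k [b bspan]]]]]]]]].
exists m, (fun i => sv (a i)), tau'.
split; first exact: tbij.
split; first exact: tcomm'.
split; first by move=> i j; rewrite -!svM acomm.
split.
  by move=> i x; have := congr1 sv (aaut i x); rewrite !svM.
split.
  move=> s us H; apply: (aind s us); apply: sv_inj; rewrite sv0 sv_sum -[RHS]H.
  apply: eq_bigr => p _; rewrite svM sv_prod /=; congr (_ * _).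
  by apply: eq_bigr => i _; rewrite svX.
have [cf Hcf] := choice bspan.
pose N := (\max_(i < n) d i)%N.
have Nb : forall i x, (x %% d i < N.+1)%N.
  move=> i x; rewrite ltnS; apply: leq_trans (ltnW (ltn_pmod x (dpos i))) _.
  by rewrite /N (bigD1 i) //= leq_maxl.
pose T := ('I_k * {ffun 'I_n -> 'I_N.+1})%type.
pose F (be : {ffun 'I_n -> 'I_N.+1}) := f (monom t [ffun i => nat_of_ord (be i)]).
pose gen (x : T) := sv (b x.1) * F x.2.
apply: (@fin_reindex _ T _ gen) => s.
have [r <-] := fsurj s; have [sr ->] := tspan r.
pose rho (p : {ffun 'I_n -> nat} * D) : {ffun 'I_n -> 'I_N.+1} :=
  [ffun i => inord (p.1 i %% d i)].
pose q (p : {ffun 'I_n -> nat} * D) : {ffun 'I_n -> nat} := [ffun i => (p.1 i %/ d i)%N].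
pose elt p : subT CR := iota' p.2 * monom u' (q p).
have tdec : forall ga : {ffun 'I_n -> nat}, monom t ga =
    \prod_(i < n) u i ^+ (ga i %/ d i) * \prod_(i < n) t i ^+ (ga i %% d i).
  move=> ga; rewrite /monom -prod_split.
    apply: eq_bigr => i _; rewrite /u -exprM -exprD (mulnC (d i)) -divn_eq //.
  by move=> i j; rewrite /u -!exprM; apply: commrX; apply/esym; apply: commrX; apply: tcomm.
have Hdec : forall p, f (iota p.2 * monom t p.1) = sv (f' (elt p)) * F (rho p).
  move=> p; rewrite /F /= (tdec p.1) /monom sv_prod -rmorphM -mulrA.
  congr (f (_ * _)); congr (_ * _).
    by apply: eq_bigr => i _; rewrite svX ffunE.
  by apply: eq_bigr => i _; rewrite !ffunE inordK.
exists (fun x => \sum_(p <- sr | rho p == x.2) sv (cf (f' (elt p)) x.1)).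
split.
  move=> x; rewrite -big_filter; apply: gs_sum => p.
  by apply: (@gs_sv _ _ _ (f' \o iota')) => //; case: (Hcf (f' (elt p))).
rewrite rmorph_sum.
transitivity (\sum_(p <- sr) \sum_(j < k) sv (cf (f' (elt p)) j) * sv (b j) * F (rho p)).
  apply: eq_bigr => p _; rewrite Hdec; set z := f' (elt p).
  have [_ Ez] := Hcf z; rewrite {1}Ez sv_sum mulr_suml; apply: eq_bigr => j _.
  by rewrite svM.
symmetry; rewrite (eq_bigr (fun x => \sum_(p <- sr | rho p == x.2)
    sv (cf (f' (elt p)) x.1) * gen x)); last by move=> x _; rewrite mulr_suml.
rewrite (eq_bigr (fun x => \sum_(p <- sr)
    (if rho p == x.2 then sv (cf (f' (elt p)) x.1) * gen x else 0))); last first.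
  by move=> x _; rewrite big_mkcond.
rewrite exchange_big; apply: eq_bigr => p _.
rewrite -(pair_bigA _ (fun j be => if rho p == be then sv (cf (f' (elt p)) j) * gen (j, be) else 0)).
apply: eq_bigr => j _; rewrite -big_mkcond (big_pred1 (rho p)); last by move=> be; exact: eq_sym.
by rewrite /gen /= mulrA.
Qed.
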